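(* Let $p$ be an odd prime and $K$ a field of characteristic $p$. Let $M$ be either the cyclic group $\mathbb{Z}/p^2\mathbb{Z}$ or the group $M_{p^3}$. Then the smallest integer $n$ such that $M$ embeds (as a group) into $\mathrm{U}_n(K)$ is $n=p+1$.
   Context: $M_{p^3}=\langle x,y\mid x^{p^2}=y^p=1,\ yxy^{-1}=x^{1+p}\rangle$ is the extra-special group of order $p^3$ and exponent $p^2$. $\mathrm{U}_n(K)$ is the group of upper-triangular unipotent $n\times n$ matrices over $K$. *)

(* Defs.v *)
From mathcomp Require Import all_boot all_order all_algebra all_fingroup all_solvable.
Set Implicit Arguments. Unset Strict Implicit. Unset Printing Implicit Defensive.
Import GRing.Theory.
Local Open Scope ring_scope.

Definition unitriangular (K : fieldType) (n : nat) (A : 'M[K]_n) : Prop :=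
  (forall i j : 'I_n, (j < i)%N -> A i j = 0) /\ (forall i : 'I_n, A i i = 1).

Definition embeds_in_U (gT : finGroupType) (G : {set gT}) (K : fieldType)
  (n : nat) : Prop :=
  exists f : gT -> 'M[K]_n,
    [/\ {in G, forall x, unitriangular (f x)},
        f 1%g = 1%:M,
        {in G &, forall x y, f (x * y)%g = f x *m f y} &
        {in G &, injective f}].

(* Main.v *)
Require Import Defs.
From mathcomp Require Import all_boot all_order all_algebra all_fingroup all_solvable.
Set Implicit Arguments. Unset Strict Implicit. Unset Printing Implicit Defensive.
Import GRing.Theory.

Section Mats.
Local Open Scope ring_scope.
Variables (F : fieldType) (p : nat).
Hypothesis pF : p \in [pchar F].

Let p_pr : prime p. Proof. exact: pcharf_prime pF. Qed.
Let p_gt1 : (1 < p)%N. Proof. exact: prime_gt1. Qed.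

Lemma pcharM : p \in [pchar 'M[F]_p.+1].
Proof. by rewrite pchar_lalg. Qed.

Lemma frobX (x y : 'M[F]_p.+1) : GRing.comm x y -> (x + y) ^+ p = x ^+ p + y ^+ p.
Proof. by move=> cxy; rewrite -!(pFrobenius_autE pcharM) pFrobenius_autD_comm. Qed.

Lemma sum_eq_nat n (a : nat) (G : 'I_n.+1 -> F) :
  \sum_(l < n.+1) ((a == l)%:R * G l) = if (a < n.+1)%N then G (inord a) else 0.
Proof.
case: ifP => an.
  rewrite (bigD1 (inord a)) //= inordK // eqxx mul1r big1 ?addr0 // => l.
  by move=> /negbTE; rewrite -val_eqE /= inordK // eq_sym => ->; rewrite mul0r.
rewrite big1 // => l _; case: eqP => [al|]; last by rewrite mul0r.
by move: (ltn_ord l); rewrite -al an.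
Qed.

Definition Nm : 'M[F]_p.+1 := \matrix_(i, j) (i.+1 == j)%:R.

Lemma NkE k i j : (Nm ^+ k) i j = ((i + k)%N == j)%:R.
Proof.
elim: k i j => [|k IH] i j.
  by rewrite expr0 addn0 -[1]/(1%:M) !mxE.
rewrite exprSr !mxE.
under eq_bigr do rewrite IH mxE.
rewrite sum_eq_nat; case: ifP => lt.
  by rewrite inordK // addnS.
rewrite addnS; case: eqP => // e; move: (ltn_ord j); by rewrite -e ltnS => /ltnW; rewrite -ltnS lt.
Qed.

Lemma Nk0 k : (p < k)%N -> Nm ^+ k = 0.
Proof.
move=> pk; apply/matrixP=> i j; rewrite NkE mxE; case: eqP => // e.
by move: (ltn_ord j); rewrite -e ltnS => h; move: (leq_ltn_trans (leq_trans (leq_addl i k) h) pk); rewrite ltnn.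
Qed.

Definition Jm : 'M[F]_p.+1 := 1 + Nm.

Lemma JpE : Jm ^+ p = 1 + Nm ^+ p.
Proof. by rewrite /Jm frobX ?expr1n //; exact/commr_sym/commr1. Qed.

Lemma Jpp : Jm ^+ (p * p) = 1.
Proof.
have c1 : GRing.comm (1 : 'M[F]_p.+1) (Nm ^+ p) by exact/commr_sym/commr1.
rewrite exprM JpE (frobX c1) expr1n -exprM Nk0 ?addr0 //.
by rewrite -{1}(muln1 p) ltn_mul2l ltnW.
Qed.

Lemma Jp_neq1 : Jm ^+ p != 1.
Proof.
rewrite JpE; apply/eqP => /matrixP /(_ 0 ord_max); rewrite !mxE NkE /= add0n eqxx.
by move=> /eqP; rewrite -subr_eq0 addrAC subrr add0r oner_eq0.
Qed.

Lemma JP1 : Jm ^+ p.+1 = 1 + Nm + Nm ^+ p.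
Proof.
rewrite exprSr JpE /Jm mulrDl mul1r mulrDr mulr1 -exprSr (Nk0 (ltnSn p)) addr0.
by [].
Qed.

Lemma deltaM (a b : 'I_p.+1) (A : 'M[F]_p.+1) i j : (delta_mx a b *m A) i j = (i == a)%:R * A b j.
Proof.
rewrite mxE (bigD1 b) //= mxE eqxx andbT big1 ?addr0 // => k /negbTE kb.
by rewrite mxE kb andbF mul0r.
Qed.

Lemma Mdelta (a b : 'I_p.+1) (A : 'M[F]_p.+1) i j : (A *m delta_mx a b) i j = A i a * (j == b)%:R.
Proof.
rewrite mxE (bigD1 a) //= mxE eqxx /= big1 ?addr0 // => k /negbTE kb.
by rewrite mxE kb mulr0.
Qed.

Definition pm1 : 'I_p.+1 := inord p.-1.
Definition Em : 'M[F]_p.+1 := delta_mx 0 pm1.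
Definition Ym : 'M[F]_p.+1 := 1 - Em.

Lemma pm1E : (pm1 : nat) = p.-1.
Proof. by rewrite inordK // ltnS leq_pred. Qed.

Lemma NE : Nm * Em = 0.
Proof. by apply/matrixP=> i j; rewrite Mdelta !mxE /= mul0r. Qed.

Lemma EN : Em * Nm = Nm ^+ p.
Proof.
apply/matrixP=> i j; rewrite deltaM NkE !mxE pm1E prednK ?prime_gt0 //.
case: (i =P 0) => [->|/eqP i0]; first by rewrite mul1r.
rewrite mul0r; case: eqP => // e; move: (ltn_ord j); rewrite -e ltnS.
rewrite -[X in (_ <= X)%N](add0n p) leq_add2r leqn0 => /eqP h; case/eqP: i0; exact: val_inj.
Qed.

Lemma ENp : Em * Nm ^+ p = 0.
Proof.
apply/matrixP=> i j; rewrite deltaM NkE !mxE pm1E.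
case: (i == 0); rewrite ?mul0r ?mul1r //; case: eqP => // e.
move: (ltn_ord j); rewrite -e ltnS -[X in (_ <= X)%N](add0n p) leq_add2r leqn0.
by rewrite -subn1 subn_eq0 leqNgt p_gt1.
Qed.

Lemma EE : Em * Em = 0.
Proof.
apply/matrixP=> i j; rewrite deltaM !mxE.
have -> : (pm1 == 0) = false by rewrite -val_eqE /= pm1E -subn1 subn_eq0 leqNgt p_gt1.
by rewrite mulr0.
Qed.

Lemma JY : Jm * Ym = Ym * Jm ^+ p.+1.
Proof.
rewrite JP1 /Jm /Ym !(mulrDl, mulrDr, mulrBl, mulrBr, mul1r, mulr1, mulrN, mulNr) NE EN ENp.
by rewrite subr0 oppr0 addr0 addrACA subrr addr0 addrAC.
Qed.

Lemma Yp : Ym ^+ p = 1.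
Proof.
rewrite /Ym frobX ?expr1n; last exact/commr_sym/commr1.
rewrite exprNn; have -> : Em ^+ p = Em ^+ (p - 2) * (Em * Em) by rewrite -expr2 -exprD subnK.
by rewrite EE !mulr0 addr0.
Qed.

Lemma unit_of_exp (x : 'M[F]_p.+1) n : x ^+ n.+1 = 1 -> x \is a GRing.unit.
Proof.
move=> h; apply/unitrP; exists (x ^+ n); split; first by rewrite -exprSr.
by rewrite -exprS.
Qed.

Lemma Jm_unit : Jm \is a GRing.unit.
Proof. by apply: (@unit_of_exp _ (p * p).-1); rewrite prednK ?Jpp // muln_gt0 prime_gt0. Qed.

Lemma Ym_unit : Ym \is a GRing.unit.
Proof. by apply: (@unit_of_exp _ p.-1); rewrite prednK ?Yp // prime_gt0. Qed.

End Mats.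

Section Tri.
Local Open Scope ring_scope.
Variables (F : fieldType) (n : nat).

Lemma unitri_mul (A B : 'M[F]_n) : unitriangular A -> unitriangular B ->
  unitriangular (A *m B).
Proof.
move=> [A0 A1] [B0 B1]; split.
  move=> i j ji; rewrite mxE big1 // => k _.
  case: (ltnP k i) => [ki|ik]; first by rewrite A0 ?mul0r.
  by rewrite B0 ?mulr0 // (leq_trans ji ik).
move=> i; rewrite mxE (bigD1 i) //= A1 B1 mul1r big1 ?addr0 // => k ki.
case: (ltnP k i) => [lt|ge]; first by rewrite A0 ?mul0r.
by rewrite B0 ?mulr0 // ltn_neqAle ge andbT eq_sym; move: ki; rewrite -val_eqE.
Qed.

Lemma strict_pow (N : 'M[F]_n.+1) : (forall i j : 'I_n.+1, (j <= i)%N -> N i j = 0) ->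
  forall k (i j : 'I_n.+1), (j < i + k)%N -> (N ^+ k) i j = 0.
Proof.
move=> N0; elim=> [|k IH] i j.
  by rewrite addn0 expr0 -[1]/(1%:M) !mxE => /ltn_eqF; rewrite eq_sym -val_eqE /= => ->.
move=> jik; rewrite exprSr mxE big1 // => l _.
case: (ltnP l (i + k)) => [lt|ge]; first by rewrite IH ?mul0r.
by rewrite N0 ?mulr0 // -ltnS (leq_trans jik) // addnS ltnS.
Qed.

Lemma unitri_exp p (A : 'M[F]_n.+1) : p \in [pchar F] -> (n < p)%N ->
  unitriangular A -> A ^+ p = 1.
Proof.
move=> pF np [A0 A1].
have pM : p \in [pchar 'M[F]_n.+1] by rewrite pchar_lalg.
have -> : A = 1 + (A - 1) by rewrite addrC subrK.
rewrite -(pFrobenius_autE pM) pFrobenius_autD_comm; last exact/commr_sym/commr1.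
rewrite !pFrobenius_autE expr1n.
have -> : (A - 1) ^+ p = 0; last by rewrite addr0.
apply/matrixP=> i j; rewrite mxE; apply: strict_pow.
  move=> i' j'; rewrite leq_eqVlt => /orP[/eqP e|lt].
    have e2 : j' = i' by apply: val_inj.
    by rewrite !mxE e2 eqxx A1 subrr.
  by rewrite !mxE A0 // eq_sym -val_eqE /= (ltn_eqF lt) subr0.
by rewrite (leq_trans (ltn_ord j)) // (leq_trans np) // leq_addl.
Qed.
End Tri.

Section Phi.
Local Open Scope ring_scope.
Variables (p : nat) (K : fieldType).
Hypothesis pK : p \in [pchar K].
Let p_pr : prime p. Proof. exact: pcharf_prime pK. Qed.

Definition phi (a : 'F_p) : K := (nat_of_ord a)%:R.

Lemma natK m : ((m %% p)%N%:R : K) = m%:R.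
Proof. by rewrite [in RHS](divn_eq m p) natrD natrM (pcharf0 pK) mulr0 add0r. Qed.

Lemma phi_nat m : phi m%:R = m%:R.
Proof. by rewrite /phi val_Fp_nat // natK. Qed.

Lemma phiD a b : phi (a + b) = phi a + phi b.
Proof. by rewrite -[a]natr_Zp -[b]natr_Zp -natrD !phi_nat natrD. Qed.

Lemma phiM a b : phi (a * b) = phi a * phi b.
Proof. by rewrite -[a]natr_Zp -[b]natr_Zp -natrM !phi_nat natrM. Qed.

Lemma phi0 : phi 0 = 0.
Proof. by rewrite -[0]/(0%:R) phi_nat. Qed.

Lemma phi1 : phi 1 = 1.
Proof. by rewrite -[1]/(1%:R) phi_nat. Qed.

Lemma phi_inj : injective phi.
Proof.
have key (a b : 'F_p) : (a <= b)%N -> phi a = phi b -> a = b.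
  move=> ab /esym/eqP; rewrite /phi -subr_eq0 -natrB // -(dvdn_pcharf pK) => d.
  apply: val_inj; apply/eqP; rewrite eqn_leq ab /= -subn_eq0.
  apply/negPn/negP => nz; have := @dvdn_leq p (b - a) ltac:(by rewrite lt0n) d.
  have : (b < p)%N by rewrite -[X in (_ < X)%N](Fp_cast p_pr) ltn_ord.
  by move=> bp /(leq_trans)/(_ (leq_subr a b)) => /(leq_ltn_trans)/(_ bp); rewrite ltnn.
move=> a b; case: (leqP a b) => [ab|/ltnW ba]; first exact: key.
by move=> /esym/(key _ _ ba)->.
Qed.

Definition Phi n (A : 'M['F_p]_n) : 'M[K]_n := map_mx phi A.

Lemma PhiM n (A B : 'M['F_p]_n) : Phi (A *m B) = Phi A *m Phi B.
Proof.
apply/matrixP=> i j; rewrite !mxE (big_morph phi phiD phi0).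
by apply: eq_bigr => k _; rewrite phiM !mxE.
Qed.

Lemma Phi1 n : Phi (1%:M : 'M['F_p]_n) = 1%:M.
Proof. by apply/matrixP=> i j; rewrite !mxE; case: (i == j); rewrite ?phi0 ?phi1. Qed.

Lemma Phi_inj n : injective (@Phi n).
Proof.
move=> A B /matrixP e; apply/matrixP=> i j; apply: phi_inj.
by have := e i j; rewrite !mxE.
Qed.

Lemma Phi_unitri n (A : 'M['F_p]_n) : unitriangular A -> unitriangular (Phi A).
Proof. by case=> A0 A1; split=> [i j ji|i]; rewrite mxE; [rewrite A0 // phi0 | rewrite A1 phi1]. Qed.

End Phi.

Section Grp.
Variables (p : nat).
Hypothesis p_pr : prime p.
Let pF : p \in [pchar 'F_p]%R. Proof. exact: pchar_Fp. Qed.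
Let p_gt1 : (1 < p)%N. Proof. exact: prime_gt1. Qed.

Definition gJ : {'GL_p.+1['F_p]} := FinRing.Unit (Jm_unit pF).
Definition gY : {'GL_p.+1['F_p]} := FinRing.Unit (Ym_unit pF).

Lemma gJpp : (gJ ^+ (p * p) = 1)%g.
Proof. by apply: val_inj; rewrite FinRing.val_unitX /= Jpp. Qed.

Lemma gJp : (gJ ^+ p != 1)%g.
Proof. by apply/eqP => /(congr1 val); rewrite FinRing.val_unitX /=; apply/eqP/Jp_neq1. Qed.

Lemma gYp : (gY ^+ p = 1)%g.
Proof. by apply: val_inj; rewrite FinRing.val_unitX /= Yp. Qed.

Lemma gJY : (gJ ^ gY = gJ ^+ p.+1)%g.
Proof.
have e : (gJ * gY = gY * gJ ^+ p.+1)%g.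
  by apply: val_inj; rewrite !FinRing.val_unitM FinRing.val_unitX /= JY.
by rewrite conjgE e mulKg.
Qed.

Lemma order_gJ : #[gJ]%g = (p ^ 2)%N.
Proof.
have : (#[gJ]%g %| p ^ 2)%N by rewrite order_dvdn -mulnn gJpp.
case/dvdn_pfactor=> // m; rewrite leq_eqVlt => /orP[/eqP -> //|].
rewrite ltnS => m1 om; case/negP: gJp; rewrite -order_dvdn om.
by rewrite -{2}(expn1 p) dvdn_exp2l.
Qed.

Lemma gY_notin : gY \notin <[gJ]>%g.
Proof.
apply/negP => /cycleP [k ek].
have : (gJ ^ gY = gJ)%g by rewrite ek conjgE -expgS expgSr mulKg.
rewrite gJY expgS => e; case/negP: gJp; apply/eqP; apply: (mulgI gJ); by rewrite e mulg1.
Qed.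

Definition unitrib (A : 'M['F_p]_p.+1) : bool :=
  [forall i : 'I_p.+1, forall j : 'I_p.+1, (j < i)%N ==> (A i j == 0%R)] && [forall i : 'I_p.+1, A i i == 1%R].

Lemma unitribP A : reflect (unitriangular A) (unitrib A).
Proof.
apply: (iffP andP) => [[/forallP h1 /forallP h2]|[h1 h2]]; split.
- by move=> i j ji; have /forallP/(_ j) := h1 i; rewrite ji => /eqP.
- by move=> i; apply/eqP.
- by apply/forallP=> i; apply/forallP=> j; apply/implyP=> ji; rewrite h1.
- by apply/forallP=> i; rewrite h2.
Qed.

Definition Uset : {set {'GL_p.+1['F_p]}} := [set u | unitrib (val u)].

Lemma unitri1 : unitriangular (1%:M : 'M['F_p]_p.+1)%R.
Proof.
split=> [i j ji|i]; rewrite mxE ?eqxx //.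
by rewrite -val_eqE /= (gtn_eqF ji).
Qed.

Lemma Uset_group : group_set Uset.
Proof.
apply/group_setP; split; first by rewrite inE; apply/unitribP; apply: unitri1.
move=> x y; rewrite !inE => /unitribP ux /unitribP uy; apply/unitribP.
by rewrite FinRing.val_unitM; apply: unitri_mul.
Qed.

Lemma gJ_U : gJ \in Uset.
Proof.
rewrite inE; apply/unitribP; split=> [i j ji|i]; rewrite /= !mxE.
  rewrite -val_eqE /= (gtn_eqF ji); case: eqP => [e|]; last by rewrite addr0.
  by move: ji; rewrite -e ltnNge leqnSn.
by rewrite eqxx (gtn_eqF (ltnSn i)) addr0.
Qed.

Lemma gY_U : gY \in Uset.
Proof.
rewrite inE; apply/unitribP; split=> [i j ji|i]; rewrite /= !mxE.
  rewrite -val_eqE /= (gtn_eqF ji); case: eqP => [e|]; last by rewrite subr0.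
  by move: ji; rewrite e.
rewrite eqxx; case: eqP => [->|]; last by rewrite subr0.
by rewrite -val_eqE /= pm1E -subn1 eq_sym subn_eq0 leqNgt p_gt1 /= subr0.
Qed.

End Grp.

Lemma embed_of (p : nat) (p_pr : prime p) gT (M : {group gT}) (K : fieldType)
  (pK : p \in [pchar K]%R) (H : {group {'GL_p.+1['F_p]}}) :
  (M \isog H)%g -> H \subset Uset p -> embeds_in_U M K p.+1.
Proof.
case/isogP=> f injf imf sub.
exists (fun g => @Phi p K _ (val (f g))); split.
- move=> g Mg; apply: (Phi_unitri pK).
  have : f g \in H by rewrite -imf mem_morphim.
  by move/(subsetP sub); rewrite inE => /unitribP.
- by rewrite morph1 FinRing.val_unit1 (Phi1 pK).
- by move=> x y Mx My; rewrite morphM // FinRing.val_unitM (PhiM pK).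
- by move=> x y Mx My /(Phi_inj pK) /val_inj; apply: (injmP injf).
Qed.

Lemma lower_bound (p : nat) gT (M : {group gT}) (K : fieldType)
  (pK : p \in [pchar K]%R) (x : gT) : x \in M -> #[x]%g = (p ^ 2)%N ->
  forall n, embeds_in_U M K n -> (p.+1 <= n)%N.
Proof.
have p_pr : prime p := pcharf_prime pK.
move=> Mx ox n [f [fU f1 fM finj]]; rewrite ltnNge; apply/negP => np.
have x1 : x != 1%g.
  apply/eqP => x1; move: ox; rewrite x1 order1 => /esym/eqP.
  by rewrite -(expn0 p) eqn_exp2l ?prime_gt1.
move: f fU f1 fM finj np; case: n => [|n] f fU f1 fM finj np.
  by case/eqP: x1; apply: finj; rewrite ?group1 // !flatmx0.
have fX k : f (x ^+ k)%g = (f x ^+ k)%R.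
  elim: k => [|k IH]; first by rewrite expg0 f1.
  by rewrite expgS fM ?groupX // IH exprS.
have : f (x ^+ p)%g = f 1%g.
  by rewrite fX f1 (unitri_exp pK np (fU x Mx)).
move=> e; have := finj _ _ (groupX p Mx) (group1 M) e; move/eqP; rewrite -order_dvdn ox.
by rewrite -[X in _ %| X](expn1 p) (dvdn_Pexp2l 2 1 (prime_gt1 p_pr)).
Qed.

Theorem corollary3p8 (p : nat) (K : fieldType) (gT : finGroupType)
  (M : {group gT}) :
  prime p -> odd p -> p \in [pchar K]%R ->
  ((cyclic M /\ #|M| = (p ^ 2)%N) \/ (M \isog 'Mod_(p ^ 3))%g) ->
  embeds_in_U M K p.+1 /\ (forall n : nat, embeds_in_U M K n -> (p.+1 <= n)%N).
Proof.
move=> p_pr p_odd pK [[cycM oM]|isoM].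
  have [x defM] := cyclicP cycM.
  have Mx : x \in M by rewrite defM cycle_id.
  have ox : #[x]%g = (p ^ 2)%N by rewrite orderE -defM.
  split; last exact: (@lower_bound p gT M K pK x Mx ox).
  apply: (embed_of p_pr pK (H := <[gJ p_pr]>%G)).
    by rewrite isog_cyclic_card // cycle_cyclic /= -orderE order_gJ oM.
  by rewrite (cycle_subG _ (Group (Uset_group p))) gJ_U.
have [[x y] [oM Mx ox _] _] := generators_modular_group p_pr (isT : (2 < 3)%N) isoM.
split; last exact: (@lower_bound p gT M K pK x Mx ox).
have GrpMod := Grp_modular_group p_pr (isT : (2 < 3)%N).
pose H := (<[gJ p_pr]> <*> <[gY p_pr]>)%G.
have homH : (H \homg Grp (x : y : x ^+ (p ^ 3.-1), y ^+ p, x ^ y = x ^+ (p ^ 3.-2).+1))%g.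
  apply/existsP; exists (gJ p_pr, gY p_pr); rewrite /= !xpair_eqE.
  by rewrite eqxx -mulnn gJpp gYp expn1 gJY !eqxx.
have HMod : #|H| = (p ^ 3)%N.
  have : (#|H| %| p ^ 3)%N.
    by rewrite -(card_modular_group p_pr (isT : (2 < 3)%N)); apply: card_homg; rewrite (GrpMod _ H).
  case/dvdn_pfactor=> // m m3 eH; rewrite eH.
  have : (<[gJ p_pr]> \proper H)%g.
    apply/properP; split; first exact: joing_subl.
    exists (gY p_pr); last exact: gY_notin.
    by rewrite (subsetP (joing_subr _ _)) // cycle_id.
  move/proper_card; rewrite -orderE order_gJ eH ltn_exp2l ?prime_gt1 // => m2.
  by have -> : m = 3 by apply/eqP; rewrite eqn_leq m3 m2.
have isoH : (H \isog 'Mod_(p ^ 3))%g.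
  by apply/(isoGrpP _ GrpMod); rewrite card_modular_group.
apply: (embed_of p_pr pK (H := H)); first exact: isog_trans isoM (isog_symr isoH).
rewrite (join_subG _ _ (Group (Uset_group p))).
by rewrite !(cycle_subG _ (Group (Uset_group p))) gJ_U gY_U.
Qed.
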